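(* Let $\mathbf{E},\mathbf{Y}$ be Euclidean spaces, $\mathcal{X}\subset\mathbf{E}$ nonempty closed convex, $h\colon\mathbf{Y}\to\mathbb{R}$ convex, $F\colon\mathbf{E}\to\mathbf{Y}$ continuously differentiable, $f=h\circ F$, $f_x(y)=h(F(x)+\nabla F(x)(y-x))$. Assume $\mathcal{X}^*=\operatorname{argmin}_{\mathcal{X}}f\neq\emptyset$, that $f(x)-\min_{\mathcal{X}}f\ge\mu\,\mathrm{dist}(x,\mathcal{X}^* )$ for all $x\in\mathcal{X}$ for some $\mu>0$, and that for some reals $a>0$, $b\ge0$, $$|f(y)-f_x(y)|\le a\|y-x\|^2+b\|y-x\|\quad\forall x,y\in\mathcal{X}.$$ Let $x_0\in\mathcal{X}$ and let $x_{k+1}$ be any minimizer of $x\mapsto f_{x_k}(x)+a\|x-x_k\|^2+b\|x-x_k\|$ over $\mathcal{X}$. If $\mathrm{dist}(x_0,\mathcal{X}^* )\le\frac{\mu-2b}{2a}$, then for all $k\ge0$, $$\mathrm{dist}(x_{k+1},\mathcal{X}^* )\le\frac{2\big(b+a\,\mathrm{dist}(x_k,\mathcal{X}^* )\big)}{\mu}\,\mathrm{dist}(x_k,\mathcal{X}^* ).$$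
   Context: $\|\cdot\|$ is the Euclidean norm on $\mathbf{E}$, $\mathrm{dist}$ the Euclidean distance, and $\nabla F(x)$ the Jacobian of $F$ at $x$. *)

(* Defs.v *)
(* real analysis over Stdlib's R.
   A Euclidean space of dimension n is modelled as R^n = (Fin.t n -> R)
   with the standard vinner product. *)
From Stdlib Require Import Reals Lra Classical ClassicalEpsilon.
From Stdlib Require Vectors.Fin.
Open Scope R_scope.

Definition vec (n : nat) := Fin.t n -> R.

Fixpoint vsum (n : nat) : vec n -> R :=
  match n return vec n -> R with
  | O => fun _ => 0
  | S m => fun v => v Fin.F1 + vsum m (fun i => v (Fin.FS i))
  end.

Definition vadd {n} (u v : vec n) : vec n := fun i => u i + v i.
Definition vsub {n} (u v : vec n) : vec n := fun i => u i - v i.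
Definition vscale {n} (t : R) (u : vec n) : vec n := fun i => t * u i.
Definition vinner {n} (u v : vec n) : R := vsum n (fun i => u i * v i).
Definition vnorm {n} (u : vec n) : R := sqrt (vinner u u).

Definition matapp {m n} (A : Fin.t m -> Fin.t n -> R) (v : vec n) : vec m :=
  fun i => vsum n (fun j => A i j * v j).

Definition is_inf (P : R -> Prop) (d : R) : Prop :=
  (forall r, P r -> d <= r) /\ (forall d', (forall r, P r -> d' <= r) -> d' <= d).

Definition Rinf (P : R -> Prop) : R := epsilon (inhabits 0) (is_inf P).

Definition vdist {n} (S : vec n -> Prop) (x : vec n) : R :=
  Rinf (fun r => exists y, S y /\ r = vnorm (vsub x y)).

Definition convex_vset {n} (S : vec n -> Prop) : Prop :=
  forall x y t, S x -> S y -> 0 <= t <= 1 ->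
    S (vadd (vscale t x) (vscale (1 - t) y)).

Definition closed_vset {n} (S : vec n -> Prop) : Prop :=
  forall x, ~ S x -> exists eps, 0 < eps /\
    forall y, vnorm (vsub y x) < eps -> ~ S y.

Definition convex_vfun {m} (h : vec m -> R) : Prop :=
  forall u v t, 0 <= t <= 1 ->
    h (vadd (vscale t u) (vscale (1 - t) v)) <= t * h u + (1 - t) * h v.

Definition has_jacobian {n m} (F : vec n -> vec m)
  (J : vec n -> Fin.t m -> Fin.t n -> R) : Prop :=
  forall x eps, 0 < eps -> exists delta, 0 < delta /\
    forall y, vnorm (vsub y x) < delta ->
      vnorm (vsub (vsub (F y) (F x)) (matapp (J x) (vsub y x)))
        <= eps * vnorm (vsub y x).

Definition continuous_jacobian {n m} (J : vec n -> Fin.t m -> Fin.t n -> R) : Prop :=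
  forall x i j eps, 0 < eps -> exists delta, 0 < delta /\
    forall y, vnorm (vsub y x) < delta -> Rabs (J y i j - J x i j) < eps.

Definition vargmin {n} (f : vec n -> R) (S : vec n -> Prop) : vec n -> Prop :=
  fun x => S x /\ forall y, S y -> f x <= f y.

(* Main.v *)
Require Import Defs.
From Stdlib Require Import Reals.
From Stdlib Require Import Lra Classical ClassicalEpsilon.
Open Scope R_scope.

Lemma vsum_ext : forall n (u v : vec n), (forall i, u i = v i) -> vsum n u = vsum n v.
Proof.
  induction n; intros u v H; simpl; auto.
  rewrite H. f_equal. apply IHn. intros; apply H.
Qed.

Lemma vnorm_sym n (x y : vec n) : vnorm (vsub x y) = vnorm (vsub y x).
Proof.
  unfold vnorm, vinner. f_equal. apply vsum_ext. intros; unfold vsub; ring.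
Qed.

Lemma vnorm_ge0 n (x : vec n) : 0 <= vnorm x.
Proof. unfold vnorm; apply sqrt_pos. Qed.

Lemma Rinf_spec (P : R -> Prop) : (exists r, P r) -> (forall r, P r -> 0 <= r) ->
  is_inf P (Rinf P).
Proof.
  intros [r0 Hr0] Hlb.
  unfold Rinf. apply epsilon_spec.
  destruct (completeness (fun s => P (- s))) as [l [Hub Hl]].
  - exists 0. intros s Hs. specialize (Hlb _ Hs). lra.
  - exists (- r0). rewrite Ropp_involutive. auto.
  - exists (- l). split.
    + intros r Hr. assert (- r <= l). { apply Hub. rewrite Ropp_involutive; auto. } lra.
    + intros d' Hd'. assert (l <= - d'). { apply Hl. intros s Hs. specialize (Hd' _ Hs). lra. } lra.
Qed.

Theorem lemma7p4 (n m : nat) (X : vec n -> Prop) (h : vec m -> R)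
  (F : vec n -> vec m) (J : vec n -> Fin.t m -> Fin.t n -> R)
  (mu a b : R) (xs : nat -> vec n) :
  (exists x : vec n, X x) -> closed_vset X -> convex_vset X ->
  convex_vfun h ->
  has_jacobian F J -> continuous_jacobian J ->
  let f := fun x : vec n => h (F x) in
  let fx := fun x y : vec n => h (vadd (F x) (matapp (J x) (vsub y x))) in
  let Xs := vargmin f X in
  (exists xs0 : vec n, Xs xs0) ->
  0 < mu ->
  (forall x xstar : vec n, X x -> Xs xstar -> f x - f xstar >= mu * vdist Xs x) ->
  0 < a -> 0 <= b ->
  (forall x y : vec n, X x -> X y ->
     Rabs (f y - fx x y) <= a * vnorm (vsub y x) ^ 2 + b * vnorm (vsub y x)) ->
  X (xs 0%nat) ->
  (forall k, vargmin (fun x : vec n => fx (xs k) x + a * vnorm (vsub x (xs k)) ^ 2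
                              + b * vnorm (vsub x (xs k))) X (xs (S k))) ->
  vdist Xs (xs 0%nat) <= (mu - 2 * b) / (2 * a) ->
  forall k, vdist Xs (xs (S k)) <=
    2 * (b + a * vdist Xs (xs k)) / mu * vdist Xs (xs k).
Proof.
  intros _ _ _ _ _ _ f fx Xs [y0 Hy0] Hmu Hsharp Ha Hb Hloc H0 Hstep _ k.
  assert (HXk : X (xs k)).
  { destruct k; [exact H0 | apply (Hstep k)]. }
  destruct (Hstep k) as [HX1 Hmin].
  set (D := vdist Xs (xs (S k))).
  set (d := vdist Xs (xs k)).
  assert (Key : forall y, Xs y ->
    mu * D <= 2 * a * vnorm (vsub (xs k) y) ^ 2 + 2 * b * vnorm (vsub (xs k) y)).
  { intros y Hy. pose proof Hy as [HyX _].
    pose proof (Hsharp _ _ HX1 Hy) as S1. fold D in S1.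
    pose proof (Hmin y HyX) as S2. simpl in S2.
    pose proof (Hloc _ _ HXk HX1) as S3.
    pose proof (Hloc _ _ HXk HyX) as S4.
    rewrite (vnorm_sym n (xs k) y).
    pose proof (Rle_abs (f (xs (S k)) - fx (xs k) (xs (S k)))) as A1.
    pose proof (Rle_abs (- (f y - fx (xs k) y))) as A2. rewrite Rabs_Ropp in A2.
    lra. }
  assert (Hinf : is_inf (fun r => exists y, Xs y /\ r = vnorm (vsub (xs k) y)) d).
  { apply Rinf_spec.
    - exists (vnorm (vsub (xs k) y0)); eauto.
    - intros r [y [_ ->]]; apply vnorm_ge0. }
  destruct Hinf as [Hlow Hgreat].
  assert (Hd0 : 0 <= d).
  { apply Hgreat. intros r [y [_ ->]]; apply vnorm_ge0. }
  assert (Main : mu * D <= 2 * (b + a * d) * d).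
  { apply Rnot_lt_le. intro Hc.
    set (del := mu * D - 2 * (b + a * d) * d).
    set (K := 4 * a * d + 2 * a + 2 * b + 1).
    assert (HK : 0 < K) by (unfold K; nra).
    set (e := Rmin 1 (del / (2 * K))).
    assert (He0 : 0 < e).
    { unfold e. apply Rmin_glb_lt; [lra|]. unfold Rdiv. apply Rmult_lt_0_compat.
      unfold del; lra. apply Rinv_0_lt_compat; lra. }
    assert (He1 : e <= 1) by apply Rmin_l.
    assert (He2 : e * K <= del / 2).
    { assert (e <= del / (2 * K)) by apply Rmin_r.
      apply Rmult_le_compat_r with (r := K) in H; [|lra].
      replace (del / (2 * K) * K) with (del / 2) in H by (field; lra). exact H. }
    destruct (classic (exists y, Xs y /\ vnorm (vsub (xs k) y) < d + e)) as [[y [Hy Hlt]]|Hno].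
    + pose proof (Key y Hy) as Ky.
      pose proof (vnorm_ge0 n (vsub (xs k) y)) as Hn.
      set (t := vnorm (vsub (xs k) y)) in *.
      assert (t * t <= (d + e) * (d + e)) by nra.
      assert (2 * a * t ^ 2 + 2 * b * t <= 2 * a * (d + e) ^ 2 + 2 * b * (d + e)) by nra.
      assert (2 * a * (d + e) ^ 2 + 2 * b * (d + e) - 2 * (b + a * d) * d <= e * K).
      { unfold K. assert (a * e * e <= a * e * 1) by (apply Rmult_le_compat_l; nra).
        replace (2 * a * (d + e) ^ 2 + 2 * b * (d + e) - 2 * (b + a * d) * d)
          with (4 * a * d * e + 2 * a * e * e + 2 * b * e) by ring. nra. }
      unfold del in *. lra.
    + assert (d + e <= d).
      { apply Hgreat. intros r [y [Hy ->]].
        apply Rnot_lt_le. intro Hl. apply Hno. eauto. }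
      lra. }
  fold D d.
  apply Rmult_le_reg_l with mu; [lra|].
  replace (mu * (2 * (b + a * d) / mu * d)) with (2 * (b + a * d) * d) by (field; lra).
  exact Main.
Qed.
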